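(* Consider the signal design problem described in the context: maximize over $T\ge2\delta$ the average flow-rate $\bar g(T)=\min\{\phi_1(T),(1-\frac{2\delta}{T})\pi_0C,\phi_2(T)\}$, where in $\phi_1,\phi_2$ the ratio $\pi$ is approximated by $\pi_0$. Then the optimal cycle lengths are: (1) Very sparse traffic, $k_0\in[0,\pi_0\bar K)$: the maximum is $\bar g^*\approx Vk_0$, with multiple optimal cycle lengths $T^*=\frac1{j_1}\frac LV$ for positive integers $j_1$ such that $Vk_0\le(1-\frac{2\delta}{T^*})\pi_0C$. (2) Sparse traffic, $k_0\in[\pi_0\bar K,\bar K)$: the maximum is determined by the intersection of $(1-\frac{2\delta}T)\pi_0C$ with the last decreasing branch $\frac{k_0L}{T}$ of $\phi_1$, namely $\bar g^*\approx\max_{T\in[\frac LV,\frac1{\pi_0}\frac LV]}\min\{\frac{k_0L}{T},(1-\frac{2\delta}T)\pi_0C\}$, with a unique optimal cycle length $T^*=\frac{k_0L}{\pi_0C}+2\delta$. (3) Critical traffic, $k_0=\bar K$: the maximum is determined by $(1-\frac{2\delta}T)\pi_0C$, and the unique optimal cycle length is $T^*=\infty$. (4) Dense traffic, $k_0\in(\bar K,K-\pi_0\frac CW]$: the maximum is determined by the intersection of $(1-\frac{2\delta}T)\pi_0C$ with the last decreasing branch $\frac{(K-k_0)L}{T}$ of $\phi_2$, namely $\bar g^*\approx\max_{T\in[\frac LW,\frac1{\pi_0}\frac LW]}\min\{\frac{(K-k_0)L}{T},(1-\frac{2\delta}T)\pi_0C\}$, with a unique optimal cycle length $T^*=\frac{(K-k_0)L}{\pi_0C}+2\delta$.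 (5) Very dense traffic, $k_0\in(K-\pi_0\frac CW,K]$: the maximum is $\bar g^*\approx(K-k_0)W$, with multiple optimal cycle lengths $T^*=\frac1{j_2}\frac LW$ for positive integers $j_2$ such that $(K-k_0)W\le(1-\frac{2\delta}{T^*})\pi_0C$.
   Context: Signalized ring road of length $L>0$ with LWR traffic, triangular fundamental diagram $Q(k)=\min\{Vk,(K-k)W\}$, $\bar K=\frac{W}{V+W}K$, $C=V\bar K$, average density $k_0\in[0,K]$, pretimed two-phase signal with cycle length $T$. With a start-up lost time $\delta>0$ per phase and a fixed allocation ratio $\pi_0\in(0,1)$ of the total effective green time $T-2\delta$, the effective green ratio is $\pi=(1-\frac{2\delta}T)\pi_0$, $T\ge2\delta$. In stationary states the average flow-rate is $\bar g=\min\{\phi_1,\pi C,\phi_2\}$ with $\phi_1=\frac{k_0}{k_1}\pi C$, $\phi_2=\frac{K-k_0}{K-k_2}\pi C$, where $\frac LV=(j_1+\alpha_1)T$, $j_1=\lfloor L/(VT)\rfloor$, $0\le\alpha_1<1$, $\frac LW=(j_2+\alpha_2)T$, $j_2=\lfloor L/(WT)\rfloor$, $0\le\alpha_2<1$, $k_1=\frac{j_1+\min\{\alpha_1/\pi,1\}}{j_1+\alpha_1}\pi\bar K$, $k_2=K-\frac{j_2+\min\{\alpha_2/\pi,1\}}{j_2+\alpha_2}\pi\frac CW$. Assuming $L/V$ and $L/W$ are much larger than $2\delta$, $\pi$ is replaced by $\pi_0$ in $\phi_1,\phi_2$ (but not in the term $\pi C=(1-\frac{2\delta}T)\pi_0C$),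 and the objective is $\max_{T\ge2\delta}\min\{\phi_1,(1-\frac{2\delta}T)\pi_0C,\phi_2\}$. *)

(* Defs.v *)
From Stdlib Require Import Reals Lra.
Open Scope R_scope.

Definition flr (x : R) : R := IZR (Int_part x).
Definition frc (x : R) : R := x - flr x.

Definition Kbar (K V W : R) : R := W / (V + W) * K.
Definition Cap (K V W : R) : R := V * Kbar K V W.

Definition j1 (L V T : R) : R := flr (L / V / T).
Definition alpha1 (L V T : R) : R := frc (L / V / T).
Definition j2 (L W T : R) : R := flr (L / W / T).
Definition alpha2 (L W T : R) : R := frc (L / W / T).

Definition k1 (K V W L T pi : R) : R :=
  (j1 L V T + Rmin (alpha1 L V T / pi) 1) / (j1 L V T + alpha1 L V T)
  * pi * Kbar K V W.
Definition k2 (K V W L T pi : R) : R :=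
  K - (j2 L W T + Rmin (alpha2 L W T / pi) 1) / (j2 L W T + alpha2 L W T)
      * pi * (Cap K V W / W).

Definition phi1 (K V W L k0 T pi : R) : R :=
  k0 / k1 K V W L T pi * (pi * Cap K V W).
Definition phi2 (K V W L k0 T pi : R) : R :=
  (K - k0) / (K - k2 K V W L T pi) * (pi * Cap K V W).

Definition capterm (K V W delta pi0 T : R) : R :=
  (1 - 2 * delta / T) * pi0 * Cap K V W.

Definition gbar (K V W L delta pi0 k0 T : R) : R :=
  Rmin (Rmin (phi1 K V W L k0 T pi0) (capterm K V W delta pi0 T))
       (phi2 K V W L k0 T pi0).

(* Main.v *)
Require Import Defs.
From Stdlib Require Import Reals Lra Lia Psatz ZArith.
Open Scope R_scope.

Lemma flr_spec x : flr x <= x < flr x + 1.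
Proof. unfold flr. destruct (base_Int_part x). lra. Qed.

Lemma flr_IZR z : flr (IZR z) = IZR z.
Proof.
  unfold flr, Int_part. rewrite <- (tech_up (IZR z) (z+1)).
  - f_equal. ring.
  - rewrite plus_IZR. simpl. lra.
  - rewrite plus_IZR. simpl. lra.
Qed.

Lemma flr_nonneg x : 0 < x -> 0 <= flr x.
Proof.
  intros hx. destruct (flr_spec x) as [h1 h2]. unfold flr in *.
  assert (-1 < IZR (Int_part x)) by lra.
  apply IZR_le. assert (-1 < Int_part x)%Z by (apply lt_IZR; exact H). lia.
Qed.

Lemma flr_small x : 0 < x < 1 -> flr x = 0.
Proof.
  intros hx. destruct (flr_spec x) as [h1 h2]. unfold flr in *.
  assert (-1 < Int_part x)%Z by (apply lt_IZR; simpl; lra).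
  assert (Int_part x < 1)%Z by (apply lt_IZR; simpl; lra).
  replace (Int_part x) with 0%Z by lia. reflexivity.
Qed.

Definition D x p := flr x + Rmin (frc x / p) 1.

Lemma frc_spec x : 0 <= frc x < 1.
Proof. unfold frc. destruct (flr_spec x). lra. Qed.

Lemma D_pos x p : 0 < x -> 0 < p < 1 -> 0 < D x p.
Proof.
  intros hx hp. unfold D. pose proof (flr_nonneg x hx). pose proof (frc_spec x).
  assert (x = flr x + frc x) by (unfold frc; ring).
  unfold Rmin; destruct Rle_dec.
  - destruct (Req_dec (frc x) 0).
    + rewrite H2 in *. assert (0 < flr x) by lra. unfold Rdiv; lra.
    + assert (0 < frc x / p) by (apply Rdiv_lt_0_compat; lra). lra.
  - lra.
Qed.

Lemma D_ge x p : 0 < x -> 0 < p < 1 -> x <= D x p.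
Proof.
  intros hx hp. unfold D. pose proof (flr_nonneg x hx). pose proof (frc_spec x).
  assert (x = flr x + frc x) by (unfold frc; ring).
  unfold Rmin; destruct Rle_dec.
  - assert (frc x <= frc x / p).
    { apply (Rmult_le_reg_r p); [lra|]. unfold Rdiv. rewrite Rmult_assoc, Rinv_l by lra. nra. }
    lra.
  - lra.
Qed.

Lemma D_le x p : 0 < x -> 0 < p < 1 -> p * D x p <= x.
Proof.
  intros hx hp. unfold D. pose proof (flr_nonneg x hx). pose proof (frc_spec x).
  assert (x = flr x + frc x) by (unfold frc; ring).
  unfold Rmin; destruct Rle_dec.
  - replace (p * (flr x + frc x / p)) with (p * flr x + frc x) by (field; lra). nra.
  - assert (p < frc x).
    { apply Rnot_le_lt in n. apply (Rmult_lt_reg_r (/p)). apply Rinv_0_lt_compat; lra.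
      rewrite Rinv_r by lra. exact n. }
    nra.
Qed.

Lemma D_eq x p : 0 < x -> 0 < p < 1 -> x = D x p -> frc x = 0 /\ 1 <= flr x.
Proof.
  intros hx hp he. unfold D in he. pose proof (flr_nonneg x hx). pose proof (frc_spec x).
  assert (x = flr x + frc x) by (unfold frc; ring).
  unfold Rmin in he; destruct Rle_dec.
  - assert (frc x = frc x / p) by lra.
    assert (frc x * p = frc x) by (rewrite H2 at 1; field; lra).
    assert (frc x = 0) by nra. split; [exact H4|].
    unfold flr in *. assert (0 < Int_part x)%Z by (apply lt_IZR; lra).
    apply IZR_le. lia.
  - lra.
Qed.

Lemma D_int x p : 0 < x -> 0 < p < 1 -> frc x = 0 -> D x p = x.
Proof.
  intros hx hp h. unfold D. rewrite h. unfold Rdiv. rewrite Rmult_0_l.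
  unfold Rmin; destruct Rle_dec; [|lra]. unfold frc in h. lra.
Qed.

Lemma D_small x p : 0 < x < 1 -> 0 < p < 1 -> x / D x p = Rmax p x.
Proof.
  intros hx hp. unfold D. rewrite (flr_small x hx). unfold frc. rewrite (flr_small x hx).
  replace (x - 0) with x by ring. rewrite Rplus_0_l.
  unfold Rmin, Rmax; destruct Rle_dec as [h|h]; destruct Rle_dec as [h'|h'].
  - assert (x <= p).
    { apply (Rmult_le_reg_r (/p)). apply Rinv_0_lt_compat; lra.
      rewrite Rinv_r by lra. exact h. }
    assert (x = p) by lra. subst. field. lra.
  - field. lra.
  - unfold Rdiv; lra.
  - exfalso. apply h. apply (Rmult_le_reg_r p); [lra|]. unfold Rdiv. rewrite Rmult_assoc, Rinv_l by lra. lra.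
Qed.

Lemma q_bounds x p : 0 < x -> 0 < p < 1 -> p <= x / D x p <= 1.
Proof.
  intros hx hp. pose proof (D_pos x p hx hp). pose proof (D_ge x p hx hp).
  pose proof (D_le x p hx hp). split.
  - apply (Rmult_le_reg_r (D x p)); [lra|]. unfold Rdiv. rewrite Rmult_assoc, Rinv_l by lra. lra.
  - apply (Rmult_le_reg_r (D x p)); [lra|]. unfold Rdiv. rewrite Rmult_assoc, Rinv_l by lra. lra.
Qed.

Lemma q_one x p : 0 < x -> 0 < p < 1 -> x / D x p = 1 -> frc x = 0 /\ 1 <= flr x.
Proof.
  intros hx hp h. pose proof (D_pos x p hx hp). apply (D_eq x p); auto.
  assert (x = x / D x p * D x p) by (field; lra). rewrite h in H0. lra.
Qed.

Lemma Kbar_pos K V W : 0 < K -> 0 < V -> 0 < W -> 0 < Kbar K V W.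
Proof. intros. unfold Kbar. apply Rmult_lt_0_compat; [apply Rdiv_lt_0_compat|]; lra. Qed.

Lemma phi1_eq K V W L k0 T p : 0 < K -> 0 < V -> 0 < W -> 0 < L -> 0 < T -> 0 < p < 1 ->
  phi1 K V W L k0 T p = k0 * V * (L / V / T / D (L / V / T) p).
Proof.
  intros. pose proof (Kbar_pos K V W H H0 H1).
  assert (hx : 0 < L / V / T) by (repeat apply Rdiv_lt_0_compat; lra).
  pose proof (D_pos _ p hx H4).
  unfold phi1, k1, Cap, j1, alpha1. fold (D (L / V / T) p).
  replace (flr (L / V / T) + frc (L / V / T)) with (L / V / T) by (unfold frc; ring).
  field. repeat split; lra.
Qed.

Lemma phi2_eq K V W L k0 T p : 0 < K -> 0 < V -> 0 < W -> 0 < L -> 0 < T -> 0 < p < 1 ->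
  phi2 K V W L k0 T p = (K - k0) * W * (L / W / T / D (L / W / T) p).
Proof.
  intros. pose proof (Kbar_pos K V W H H0 H1).
  assert (hx : 0 < L / W / T) by (repeat apply Rdiv_lt_0_compat; lra).
  pose proof (D_pos _ p hx H4).
  unfold phi2, k2, Cap, j2, alpha2. fold (D (L / W / T) p).
  replace (flr (L / W / T) + frc (L / W / T)) with (L / W / T) by (unfold frc; ring).
  replace (K - (K - D (L / W / T) p / (L / W / T) * p * (V * Kbar K V W / W))) with
     (D (L / W / T) p / (L / W / T) * p * (V * Kbar K V W / W)) by ring.
  field. repeat split; lra.
Qed.

Lemma D_nat (j : nat) p : (0 < j)%nat -> 0 < p < 1 -> D (INR j) p = INR j.
Proof.
  intros hj hp. apply D_int; auto. apply lt_0_INR; exact hj.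
  unfold frc. rewrite INR_IZR_INZ, flr_IZR. ring.
Qed.

Lemma cap_T d p c T : 0 < c -> 0 < p -> 0 < d -> 0 < T -> 0 <= (1 - 2*d/T)*p*c -> 2*d <= T.
Proof.
  intros hc hp hd hT h.
  assert (0 <= 1 - 2*d/T).
  { destruct (Rle_dec 0 (1 - 2*d/T)); auto. exfalso.
    assert (0 < p*c) by nra. nra. }
  assert (2*d/T <= 1) by lra.
  apply (Rmult_le_compat_r T) in H0; [|lra].
  unfold Rdiv in H0. rewrite Rmult_assoc, Rinv_l in H0 by lra. lra.
Qed.

Lemma caseA L v a c p d (P Q cap g : R -> R):
 0<L -> 0<v -> 0<c -> 0<p<1 -> 0<d -> 0<=a -> a*v < p*c ->
 (forall T, 0<T -> P T = a*v*(L/v/T / D (L/v/T) p)) ->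
 (forall T, 0<T -> p*c <= Q T) ->
 (forall T, cap T = (1-2*d/T)*p*c) ->
 (forall T, 0<T -> g T = Rmin (Rmin (P T) (cap T)) (Q T)) ->
 (forall T, 2*d<=T -> g T <= a*v) /\
 (a*v <= cap (L/v) -> exists T, 2*d<=T /\ g T = a*v) /\
 (forall j:nat, (0<j)%nat -> a*v <= cap (L/v/INR j) -> 2*d <= L/v/INR j /\ g (L/v/INR j) = a*v) /\
 (0<a -> forall T, 2*d<=T -> g T = a*v -> exists j:nat, (0<j)%nat /\ T = L/v/INR j /\ a*v <= cap T).
Proof.
  intros hL hv hc hp hd ha hav hP hQ hcap hg.
  assert (hx : forall T, 0 < T -> 0 < L/v/T) by (intros; repeat apply Rdiv_lt_0_compat; lra).
  assert (hc3 : forall j:nat, (0<j)%nat -> a*v <= cap (L/v/INR j) -> 2*d <= L/v/INR j /\ g (L/v/INR j) = a*v).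
  { intros j hj hcj. pose proof (lt_0_INR j hj) as hj'.
    assert (hT : 0 < L/v/INR j) by (repeat apply Rdiv_lt_0_compat; lra).
    split.
    - apply (cap_T d p c); try lra. rewrite <- hcap. nra.
    - rewrite hg by exact hT. rewrite hP by exact hT.
      replace (L / v / (L / v / INR j)) with (INR j) by (field; lra).
      rewrite D_nat by auto. replace (INR j / INR j) with 1 by (field; lra).
      pose proof (hQ _ hT). unfold Rmin; repeat destruct Rle_dec; lra. }
  split; [|split; [|split]].
  - intros T hT. assert (0 < T) by lra. rewrite hg by lra. rewrite hP by lra.
    destruct (q_bounds (L/v/T) p (hx T H) hp).
    assert (a*v*(L / v / T / D (L / v / T) p) <= a*v*1) by (apply Rmult_le_compat_l; nra).
    unfold Rmin; repeat destruct Rle_dec; lra.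
  - intros h. exists (L/v/INR 1). apply hc3; auto. simpl. replace (L/v/1) with (L/v) by (field; lra). exact h.
  - exact hc3.
  - intros ha' T hT he. assert (hT0 : 0 < T) by lra.
    pose proof (hg T hT0) as hgT. rewrite hP in hgT by lra.
    destruct (q_bounds (L/v/T) p (hx T hT0) hp) as [hq1 hq2].
    set (q := L / v / T / D (L / v / T) p) in *.
    assert (a*v <= a*v*q) by (rewrite he in hgT; revert hgT; unfold Rmin; repeat destruct Rle_dec; lra).
    assert (hav0 : 0 < a*v) by (apply Rmult_lt_0_compat; lra).
    assert (1 <= q) by (apply (Rmult_le_reg_l (a*v)); lra).
    assert (q = 1) by lra.
    destruct (q_one (L/v/T) p (hx T hT0) hp H1) as [hf hfl].
    assert (hcT : a*v <= cap T) by (rewrite he in hgT; revert hgT; unfold Rmin; repeat destruct Rle_dec; lra).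
    unfold flr in hfl.
    exists (Z.to_nat (Int_part (L/v/T))).
    assert (hz : (1 <= Int_part (L/v/T))%Z) by (apply le_IZR; exact hfl).
    assert (hI : INR (Z.to_nat (Int_part (L/v/T))) = L/v/T).
    { rewrite INR_IZR_INZ, Z2Nat.id by lia. unfold frc, flr in hf. lra. }
    split; [lia|]. split; [|exact hcT]. rewrite hI. field. repeat split; lra.
Qed.

Lemma div_lt1 u T : 0 < T -> u < T -> u / T < 1.
Proof. intros. apply (Rmult_lt_reg_r T); [lra|]. unfold Rdiv; rewrite Rmult_assoc, Rinv_l; lra. Qed.

Lemma div_gt p u T : 0 < T -> p * T < u -> p < u / T.
Proof. intros. apply (Rmult_lt_reg_r T); [lra|]. unfold Rdiv; rewrite Rmult_assoc, Rinv_l; lra. Qed.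

Lemma lt_div p u T : 0 < p -> u < T / p -> p * u < T.
Proof. intros. apply (Rmult_lt_compat_l p) in H0; [|lra]. replace (p * (T/p)) with T in H0 by (field; lra). lra. Qed.

Lemma caseB L v a c p d Ts (P Q cap g : R -> R):
 0<L -> 0<v -> 0<c -> 0<p<1 -> 0<d -> 0<a -> p*c <= a*v ->
 Ts = a*L/(p*c) + 2*d -> Ts < L/v/p ->
 (forall T, 0<T -> P T = a*v*(L/v/T / D (L/v/T) p)) ->
 (forall T, 0<T -> p*c <= Q T) ->
 (forall T, cap T = (1-2*d/T)*p*c) ->
 (forall T, 0<T -> g T = Rmin (Rmin (P T) (cap T)) (Q T)) ->
       L / v <= Ts <= L / v / p
       /\ a * L / Ts = cap Ts
       /\ (forall T, L / v <= T <= L / v / p ->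
             Rmin (a * L / T) (cap T) <= Rmin (a * L / Ts) (cap Ts))
       /\ g Ts = Rmin (a * L / Ts) (cap Ts)
       /\ (forall T, 2 * d <= T -> g T <= g Ts)
       /\ (forall T, 2 * d <= T -> g T = g Ts -> T = Ts).
Proof.
  intros hL hv hc hp hd ha hav hTs hTs2 hP hQ hcap hg.
  assert (hLv : 0 < L / v) by (apply Rdiv_lt_0_compat; lra).
  assert (hpc : 0 < p * c) by nra.
  assert (h1 : L / v <= a * L / (p * c)).
  { replace (a * L / (p * c)) with (L / v * (a * v / (p * c))) by (field; lra).
    assert (1 <= a * v / (p * c)).
    { apply (Rmult_le_reg_r (p*c)); [lra|]. unfold Rdiv; rewrite Rmult_assoc, Rinv_l; lra. }
    nra. }
  assert (hTsLv : L / v < Ts) by lra.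
  assert (hTs0 : 0 < Ts) by lra.
  assert (hcapTs : a * L / Ts = cap Ts).
  { rewrite hcap. replace (2*d) with (Ts - a*L/(p*c)) by lra. field. lra. }
  assert (capmono : forall T, 0 < T -> T <= Ts -> cap T <= cap Ts).
  { intros T hT hle. rewrite !hcap. unfold Rdiv.
    assert (/ Ts <= / T) by (apply Rinv_le_contravar; lra).
    assert (0 <= (/T - /Ts)*(2*d*(p*c))) by (apply Rmult_le_pos; nra). nra. }
  assert (capstrict : forall T, 0 < T -> T < Ts -> cap T < cap Ts).
  { intros T hT hle. rewrite !hcap. unfold Rdiv.
    assert (/ Ts < / T) by (apply Rinv_lt_contravar; nra).
    assert (0 < (/T - /Ts)*(2*d*(p*c))) by (apply Rmult_lt_0_compat; nra). nra. }
  assert (hG : g Ts = a * L / Ts).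
  { rewrite hg by lra. rewrite hP by lra.
    assert (hx1 : L / v / Ts < 1) by (apply div_lt1; lra).
    assert (hxp : p < L / v / Ts) by (apply div_gt; [lra|]; apply lt_div; lra).
    assert (hx0 : 0 < L / v / Ts) by (apply Rdiv_lt_0_compat; lra).
    rewrite D_small by lra. rewrite Rmax_right by lra.
    replace (a * v * (L / v / Ts)) with (a * L / Ts) by (field; lra).
    pose proof (hQ Ts hTs0). rewrite hcapTs in *.
    assert (cap Ts <= p * c).
    { rewrite hcap. assert (0 <= 2 * d / Ts) by (unfold Rdiv; apply Rmult_le_pos; [lra|]; left; apply Rinv_0_lt_compat; lra). nra. }
    unfold Rmin; repeat destruct Rle_dec; lra. }
  assert (strict : forall T, 2 * d <= T -> T <> Ts -> g T < g Ts).
  { intros T hT hne. assert (hT0 : 0 < T) by lra. rewrite hG.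
    assert (gle : g T <= P T /\ g T <= cap T) by (rewrite hg by lra; unfold Rmin; repeat destruct Rle_dec; lra).
    destruct (Rlt_or_le T Ts) as [hlt|hge].
    - pose proof (capstrict T hT0 hlt). lra.
    - assert (hgt : Ts < T) by lra.
      assert (hx1 : L / v / T < 1) by (apply div_lt1; lra).
      assert (hx0 : 0 < L / v / T) by (apply Rdiv_lt_0_compat; lra).
      rewrite hP in gle by lra. rewrite D_small in gle by lra.
      assert (a * v * Rmax p (L / v / T) < a * L / Ts); [|lra].
      apply Rmax_case.
      + assert (hh : Ts * (v*p) < L).
        { pose proof hTs2 as h2. apply Rmult_lt_compat_r with (r:=v*p) in h2; [|nra].
          replace (L/v/p*(v*p)) with L in h2 by (field; lra). exact h2. }
        assert (v * p < L / Ts) by (apply div_gt; [lra|]; nra).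
        replace (a * L / Ts) with (a * (L / Ts)) by (field; lra). nra.
      + replace (a * v * (L / v / T)) with (a * L * / T) by (field; lra).
        unfold Rdiv. assert (/ T < / Ts) by (apply Rinv_lt_contravar; nra).
        assert (0 < a * L) by nra. nra. }
  split; [lra|]. split; [exact hcapTs|]. split; [|split; [|split]].
  - intros T [hT1 hT2]. assert (hT0 : 0 < T) by lra. rewrite <- hcapTs.
    destruct (Rle_or_lt T Ts) as [hle|hlt].
    + pose proof (capmono T hT0 hle). rewrite hcapTs in *. unfold Rmin; repeat destruct Rle_dec; lra.
    + assert (a * L / T <= a * L / Ts).
      { unfold Rdiv. assert (/ T < / Ts) by (apply Rinv_lt_contravar; nra). assert (0 < a * L) by nra. nra. }
      unfold Rmin; repeat destruct Rle_dec; lra.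
  - rewrite hG, <- hcapTs. unfold Rmin; destruct Rle_dec; lra.
  - intros T hT. destruct (Req_dec T Ts) as [e|ne]; [subst; lra|]. pose proof (strict T hT ne). lra.
  - intros T hT he. destruct (Req_dec T Ts) as [e|ne]; [exact e|]. pose proof (strict T hT ne). lra.
Qed.

Lemma min_reord a b c : Rmin (Rmin a b) c = Rmin (Rmin c b) a.
Proof. unfold Rmin; repeat destruct Rle_dec; lra. Qed.

Theorem theorem4p1 (L V W K delta pi0 k0 : R)
  (hL : 0 < L) (hV : 0 < V) (hW : 0 < W) (hK : 0 < K) (hdelta : 0 < delta)
  (hpi0 : 0 < pi0) (hpi1 : pi0 < 1) (hk0 : 0 <= k0) (hk0K : k0 <= K) :
  let Kb := Kbar K V W in
  let C := Cap K V W in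
  let g := gbar K V W L delta pi0 k0 in
  let cap := capterm K V W delta pi0 in
  (* (1) very sparse traffic *)
  (k0 < pi0 * Kb ->
     (forall T, 2 * delta <= T -> g T <= V * k0)
     /\ (V * k0 <= cap (L / V) -> exists T, 2 * delta <= T /\ g T = V * k0)
     /\ (forall j : nat, (0 < j)%nat -> V * k0 <= cap (L / V / INR j) ->
           2 * delta <= L / V / INR j /\ g (L / V / INR j) = V * k0)
     /\ (0 < k0 -> forall T, 2 * delta <= T -> g T = V * k0 ->
           exists j : nat, (0 < j)%nat /\ T = L / V / INR j /\ V * k0 <= cap T))
  /\
  (* (2) sparse traffic *)
  (pi0 * Kb <= k0 < Kb ->
     let Ts := k0 * L / (pi0 * C) + 2 * delta in
     Ts < L / V / pi0 ->
       L / V <= Ts <= L / V / pi0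
       /\ k0 * L / Ts = cap Ts
       /\ (forall T, L / V <= T <= L / V / pi0 ->
             Rmin (k0 * L / T) (cap T) <= Rmin (k0 * L / Ts) (cap Ts))
       /\ g Ts = Rmin (k0 * L / Ts) (cap Ts)
       /\ (forall T, 2 * delta <= T -> g T <= g Ts)
       /\ (forall T, 2 * delta <= T -> g T = g Ts -> T = Ts))
  /\
  (* (3) critical traffic: optimal cycle length is infinite *)
  (k0 = Kb ->
       (forall T, 2 * delta <= T -> g T = cap T)
       /\ (forall T, 2 * delta <= T -> g T < pi0 * C)
       /\ (forall eps, 0 < eps -> exists T0, 2 * delta <= T0 /\
             forall T, T0 <= T -> pi0 * C - eps < g T)
       /\ (forall T, 2 * delta <= T -> exists T', T < T' /\ g T < g T'))
  /\
  (* (4) dense traffic *)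
  (Kb < k0 <= K - pi0 * C / W ->
     let Ts := (K - k0) * L / (pi0 * C) + 2 * delta in
     Ts < L / W / pi0 ->
       L / W <= Ts <= L / W / pi0
       /\ (K - k0) * L / Ts = cap Ts
       /\ (forall T, L / W <= T <= L / W / pi0 ->
             Rmin ((K - k0) * L / T) (cap T) <= Rmin ((K - k0) * L / Ts) (cap Ts))
       /\ g Ts = Rmin ((K - k0) * L / Ts) (cap Ts)
       /\ (forall T, 2 * delta <= T -> g T <= g Ts)
       /\ (forall T, 2 * delta <= T -> g T = g Ts -> T = Ts))
  /\
  (* (5) very dense traffic *)
  (K - pi0 * C / W < k0 ->
     (forall T, 2 * delta <= T -> g T <= (K - k0) * W)
     /\ ((K - k0) * W <= cap (L / W) ->
           exists T, 2 * delta <= T /\ g T = (K - k0) * W)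
     /\ (forall j : nat, (0 < j)%nat -> (K - k0) * W <= cap (L / W / INR j) ->
           2 * delta <= L / W / INR j /\ g (L / W / INR j) = (K - k0) * W)
     /\ (k0 < K -> forall T, 2 * delta <= T -> g T = (K - k0) * W ->
           exists j : nat, (0 < j)%nat /\ T = L / W / INR j /\ (K - k0) * W <= cap T)).
Proof.
  cbv zeta.
  assert (hp : 0 < pi0 < 1) by lra.
  pose proof (Kbar_pos K V W hK hV hW) as hKb.
  assert (hCe : Cap K V W = V * Kbar K V W) by reflexivity.
  assert (hC : 0 < Cap K V W) by (rewrite hCe; nra).
  assert (hCW : Cap K V W / W = K - Kbar K V W) by (unfold Cap, Kbar; field; lra).
  assert (hP1 := fun T hT => phi1_eq K V W L k0 T pi0 hK hV hW hL hT hp).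
  assert (hP2 := fun T hT => phi2_eq K V W L k0 T pi0 hK hV hW hL hT hp).
  assert (hcap : forall T, capterm K V W delta pi0 T = (1 - 2*delta/T)*pi0*Cap K V W)
    by reflexivity.
  assert (hg : forall T, 0 < T -> gbar K V W L delta pi0 k0 T =
     Rmin (Rmin (phi1 K V W L k0 T pi0) (capterm K V W delta pi0 T)) (phi2 K V W L k0 T pi0))
    by reflexivity.
  assert (hg' : forall T, 0 < T -> gbar K V W L delta pi0 k0 T =
     Rmin (Rmin (phi2 K V W L k0 T pi0) (capterm K V W delta pi0 T)) (phi1 K V W L k0 T pi0))
    by (intros; unfold gbar; apply min_reord).
  assert (lb2 : k0 <= Kbar K V W -> forall T, 0 < T -> pi0 * Cap K V W <= phi2 K V W L k0 T pi0).
  { intros hk T hT. rewrite hP2 by exact hT.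
    assert (hy : 0 < L / W / T) by (repeat apply Rdiv_lt_0_compat; lra).
    destruct (q_bounds _ pi0 hy hp).
    assert (Cap K V W <= (K - k0) * W).
    { assert (Cap K V W = (K - Kbar K V W) * W) by (rewrite <- hCW; field; lra). nra. }
    nra. }
  assert (lb1 : Kbar K V W <= k0 -> forall T, 0 < T -> pi0 * Cap K V W <= phi1 K V W L k0 T pi0).
  { intros hk T hT. rewrite hP1 by exact hT.
    assert (hy : 0 < L / V / T) by (repeat apply Rdiv_lt_0_compat; lra).
    destruct (q_bounds _ pi0 hy hp).
    assert (Cap K V W <= k0 * V) by (rewrite hCe; nra).
    nra. }
  split; [|split; [|split; [|split]]].
  -
    intros h1. rewrite (Rmult_comm V k0).
    apply (caseA L V k0 (Cap K V W) pi0 delta (fun T => phi1 K V W L k0 T pi0) (fun T => phi2 K V W L k0 T pi0)); auto.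
    + rewrite hCe. nra.
    + intros T hT. apply lb2; [|exact hT]. nra.
  -
    intros [h1 h2] hTs.
    apply (caseB L V k0 (Cap K V W) pi0 delta _ (fun T => phi1 K V W L k0 T pi0)
             (fun T => phi2 K V W L k0 T pi0)); auto.
    + nra.
    + rewrite hCe. nra.
    + intros T hT. apply lb2; [lra|exact hT].
  -
    intros hk.
    assert (hgc : forall T, 2 * delta <= T -> gbar K V W L delta pi0 k0 T = capterm K V W delta pi0 T).
    { intros T hT. rewrite hg by lra.
      pose proof (lb1 (ltac:(lra)) T ltac:(lra)). pose proof (lb2 (ltac:(lra)) T ltac:(lra)).
      assert (capterm K V W delta pi0 T <= pi0 * Cap K V W).
      { rewrite hcap. assert (0 <= 2 * delta / T) by (unfold Rdiv; apply Rmult_le_pos; [lra|]; left; apply Rinv_0_lt_compat; lra).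
        assert (0 <= 2 * delta / T * (pi0 * Cap K V W)) by (apply Rmult_le_pos; nra). nra. }
      unfold Rmin; repeat destruct Rle_dec; lra. }
    assert (capv : forall T, 0 < T -> capterm K V W delta pi0 T = pi0 * Cap K V W - 2 * delta * pi0 * Cap K V W / T).
    { intros T hT. rewrite hcap. field. lra. }
    assert (hpc : 0 < 2 * delta * pi0 * Cap K V W) by (apply Rmult_lt_0_compat; nra).
    split; [exact hgc|]. split; [|split].
    + intros T hT. rewrite hgc, capv by lra.
      assert (0 < 2 * delta * pi0 * Cap K V W / T) by (apply Rdiv_lt_0_compat; lra). lra.
    + intros eps heps. exists (2 * delta + 2 * delta * pi0 * Cap K V W / eps).
      assert (0 < 2 * delta * pi0 * Cap K V W / eps) by (apply Rdiv_lt_0_compat; lra).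
      split; [lra|]. intros T hT. rewrite hgc, capv by lra.
      assert (2 * delta * pi0 * Cap K V W / T < eps); [|lra].
      apply (Rmult_lt_reg_r T); [lra|]. unfold Rdiv. rewrite Rmult_assoc, Rinv_l by lra.
      assert (2 * delta * pi0 * Cap K V W = eps * (2 * delta * pi0 * Cap K V W / eps)) by (field; lra).
      nra.
    + intros T hT. exists (T + 1). split; [lra|]. rewrite !hgc, !capv by lra.
      assert (2 * delta * pi0 * Cap K V W / (T + 1) < 2 * delta * pi0 * Cap K V W / T); [|lra].
      unfold Rdiv. apply Rmult_lt_compat_l; [lra|]. apply Rinv_lt_contravar; nra.
  -
    intros [h1 h2] hTs.
    assert (hKk : pi0 * Cap K V W <= (K - k0) * W).
    { apply (Rmult_le_compat_r W) in h2; [|lra].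
      replace ((K - pi0 * Cap K V W / W) * W) with (K * W - pi0 * Cap K V W) in h2 by (field; lra). nra. }
    apply (caseB L W (K - k0) (Cap K V W) pi0 delta _ (fun T => phi2 K V W L k0 T pi0)
             (fun T => phi1 K V W L k0 T pi0)); auto.
    + assert (0 < pi0 * Cap K V W) by nra. nra.
    + intros T hT. apply lb1; [lra|exact hT].
  -
    intros h5.
    assert (hKk : (K - k0) * W < pi0 * Cap K V W).
    { apply (Rmult_lt_compat_r W) in h5; [|lra].
      replace ((K - pi0 * Cap K V W / W) * W) with (K * W - pi0 * Cap K V W) in h5 by (field; lra). nra. }
    assert (hkb : Kbar K V W <= k0).
    { assert (pi0 * Cap K V W / W < Cap K V W / W).
      { unfold Rdiv. apply Rmult_lt_compat_r; [apply Rinv_0_lt_compat; lra|]. nra. }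
      lra. }
    destruct (caseA L W (K - k0) (Cap K V W) pi0 delta (fun T => phi2 K V W L k0 T pi0)
             (fun T => phi1 K V W L k0 T pi0) (capterm K V W delta pi0) (gbar K V W L delta pi0 k0)
             hL hW hC hp hdelta ltac:(lra) hKk (fun T hT => hP2 T hT)
             (fun T hT => lb1 hkb T hT) hcap hg')
      as [a [b [c d]]].
    split; [exact a|]. split; [exact b|]. split; [exact c|].
    intros hk. apply d. lra.
Qed.
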